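(* Let $\mathcal{U}$ be a separable Banach space with dual $\mathcal{U}^*$ and duality pairing $[\cdot,\cdot]$, endowed with a quadratic norm given by a linear bijection $\mathcal{K}:\mathcal{U}^*\to\mathcal{U}$ which is symmetric and positive, $\|u\|^2=[\mathcal{K}^{-1}u,u]$. Let $\phi_1,\dots,\phi_N\in\mathcal{U}^*$ be nontrivial, $\boldsymbol{\phi}=(\phi_1,\dots,\phi_N)$, and $\Theta\in\mathbb{R}^{N\times N}$ with $\Theta_{i,n}=[\phi_i,\mathcal{K}\phi_n]$, assumed invertible; let $\chi_i=\sum_{n=1}^N(\Theta^{-1})_{i,n}\mathcal{K}\phi_n$. Let $G:\mathbb{R}^N\to\mathbb{R}^I$ and $F:\mathbb{R}^N\to\mathbb{R}^M$ be (possibly nonlinear) functions, $\gamma$ a nonzero real parameter, and fix $(\mathbf{o},\mathbf{y})\in\mathbb{R}^I\times\mathbb{R}^M$. Then $u^\dagger\in\mathcal{U}$ is a minimizer of $$\min_{u\in\mathcal{U}}\ \|u\|^2+\frac{1}{\gamma^2}|G([\boldsymbol{\phi},u])-\mathbf{o}|^2\quad\text{s.t.}\quad F([\boldsymbol{\phi},u])=\mathbf{y}$$ if and only if $u^\dagger=\sum_{n=1}^N z^\dagger_n\chi_n$ where $\mathbf{z}^\dagger$ is a minimizer of $$\min_{\mathbf{z}\in\mathbb{R}^N}\ \mathbf{z}^T\Theta^{-1}\mathbf{z}+\frac{1}{\gamma^2}|G(\mathbf{z})-\mathbf{o}|^2\quad\text{s.t.}\quad F(\mathbf{z})=\mathb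f{y}.$$
   Context: Symmetric means $[\mathcal{K}\phi,\varphi]=[\mathcal{K}\varphi,\phi]$ and positive means $[\mathcal{K}\phi,\phi]>0$ for $\phi\ne0$. $[\boldsymbol{\phi},u]$ denotes the vector $([\phi_1,u],\dots,[\phi_N,u])\in\mathbb{R}^N$; $|\cdot|$ is the Euclidean norm. *)

(* Defs.v *)
From HB Require Import structures.
From mathcomp Require Import all_boot all_order all_algebra.
From mathcomp Require Import all_classical all_reals all_analysis.
Set Implicit Arguments. Unset Strict Implicit. Unset Printing Implicit Defensive.
Import Order.TTheory GRing.Theory Num.Theory.
Import numFieldNormedType.Exports.
Local Open Scope classical_set_scope.
Local Open Scope ring_scope.

Definition separable (T : topologicalType) : Prop :=
  exists D : set T, countable D /\ dense D.

(* Elements of the topological dual U^*: continuous linear functionals U -> R.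
   The duality pairing [f, u] is just application f u. *)
Definition is_dual (R : realType) (U : normedModType R) (f : U -> R) : Prop :=
  (forall (a : R) (x y : U), f (a *: x + y) = a * f x + f y) /\ continuous f.

Definition fadd (R : realType) (U : normedModType R) (f g : U -> R) : U -> R :=
  fun x => f x + g x.
Definition fscale (R : realType) (U : normedModType R) (a : R) (f : U -> R)
  : U -> R := fun x => a * f x.

Definition K_linear (R : realType) (U : normedModType R) (K : (U -> R) -> U) :=
  forall (a : R) (f g : U -> R), is_dual f -> is_dual g ->
    K (fadd (fscale a f) g) = a *: K f + K g.
Definition K_bijective (R : realType) (U : normedModType R) (K : (U -> R) -> U) :=
  (forall f g : U -> R, is_dual f -> is_dual g -> K f = K g -> f = g) /\
  (forall u : U, exists f : U -> R, is_dual f /\ K f = u).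
Definition K_symmetric (R : realType) (U : normedModType R) (K : (U -> R) -> U) :=
  forall f g : U -> R, is_dual f -> is_dual g -> f (K g) = g (K f).
Definition K_positive (R : realType) (U : normedModType R) (K : (U -> R) -> U) :=
  forall f : U -> R, is_dual f -> f <> (fun _ => 0) -> 0 < f (K f).
(* ||u||^2 = [K^{-1} u, u], where K^{-1} u is the unique dual element f with K f = u *)
Definition K_induces_norm (R : realType) (U : normedModType R) (K : (U -> R) -> U) :=
  forall f : U -> R, is_dual f -> `|K f| ^+ 2 = f (K f).

Definition pairv (R : realType) (U : normedModType R) (N : nat)
  (phi : 'I_N -> U -> R) (u : U) : 'cV[R]_N := \col_i phi i u.

Definition Theta (R : realType) (U : normedModType R) (N : nat)
  (K : (U -> R) -> U) (phi : 'I_N -> U -> R) : 'M[R]_N :=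
  \matrix_(i, n) phi i (K (phi n)).

Definition chi (R : realType) (U : normedModType R) (N : nat)
  (K : (U -> R) -> U) (phi : 'I_N -> U -> R) (i : 'I_N) : U :=
  \sum_(n < N) (invmx (Theta K phi)) i n *: K (phi n).

Definition sqnorm (R : realType) (m : nat) (x : 'cV[R]_m) : R :=
  \sum_(i < m) (x i 0) ^+ 2.

Definition is_minimizer (R : realType) (A : Type) (C : A -> Prop) (J : A -> R)
  (a : A) : Prop := C a /\ (forall b, C b -> J a <= J b).

(* Main.v *)
Require Import Defs.
From HB Require Import structures.
From mathcomp Require Import all_boot all_order all_algebra.
From mathcomp Require Import all_classical all_reals all_analysis.
From mathcomp Require Import ring lra.
Import Order.TTheory GRing.Theory Num.Theory.
Import numFieldNormedType.Exports.
Local Open Scope classical_set_scope.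
Local Open Scope ring_scope.

Lemma dual0 (R : realType) (U : normedModType R) (f : U -> R) :
  is_dual f -> f 0 = 0.
Proof.
move=> [Hl _]; have := Hl 1 0 0; rewrite scaler0 add0r mul1r => e; lra.
Qed.

Lemma dualD (R : realType) (U : normedModType R) (f : U -> R) x y :
  is_dual f -> f (x + y) = f x + f y.
Proof. move=> [Hl _]; by rewrite -[x]scale1r Hl mul1r scale1r. Qed.

Lemma dualZ (R : realType) (U : normedModType R) (f : U -> R) a x :
  is_dual f -> f (a *: x) = a * f x.
Proof. move=> H; have := (proj1 H) a x 0; by rewrite addr0 dual0 // addr0. Qed.

Lemma dual_sum (R : realType) (U : normedModType R) (f : U -> R)
  (J : Type) (r : seq J) (P : pred J) (c : J -> U) :
  is_dual f -> f (\sum_(m <- r | P m) c m) = \sum_(m <- r | P m) f (c m).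
Proof.
move=> H; elim: r => [|a r IH]; first by rewrite !big_nil dual0.
by rewrite !big_cons; case: (P a); rewrite ?dualD ?IH.
Qed.

Lemma dual_comb (R : realType) (U : normedModType R) (a : R) (f g : U -> R) :
  is_dual f -> is_dual g -> is_dual (fadd (fscale a f) g).
Proof.
move=> Hf Hg; split.
  move=> b x y; rewrite /fadd /fscale.
  rewrite (proj1 Hf) (proj1 Hg); ring.
move=> x; apply: continuousD; last exact: (proj2 Hg).
apply: continuousM; first exact: cst_continuous.
exact: (proj2 Hf).
Qed.

Lemma dual_zero (R : realType) (U : normedModType R) : is_dual (fun _ : U => (0:R)).
Proof. split; first by move=> *; rewrite mulr0 addr0. exact: cst_continuous. Qed.

Lemma K0 (R : realType) (U : normedModType R) (K : (U -> R) -> U) :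
  K_linear K -> K (fun _ => 0) = 0.
Proof.
move=> HK; have := HK 1 _ _ (@dual_zero R U) (@dual_zero R U).
have -> : fadd (fscale 1 (fun _ : U => (0:R))) (fun _ => 0) = (fun _ => 0).
  by apply: funext => x; rewrite /fadd /fscale mulr0 addr0.
rewrite scale1r => e.
have := congr1 (fun v => v - K (fun _ => 0)) e; rewrite /= addrK subrr; done.
Qed.

Lemma K_sum (R : realType) (U : normedModType R) (K : (U -> R) -> U)
  (N : nat) (phi : 'I_N -> U -> R) (w : 'I_N -> R) (r : seq 'I_N) :
  K_linear K -> (forall i, is_dual (phi i)) ->
  is_dual (fun x => \sum_(m <- r) w m * phi m x) /\
  K (fun x => \sum_(m <- r) w m * phi m x) = \sum_(m <- r) w m *: K (phi m).
Proof.
move=> HK Hphi; elim: r => [|a r [IHd IHK]].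
  have -> : (fun x : U => \sum_(m <- [::]) w m * phi m x) = (fun _ => 0).
    by apply: funext => x; rewrite big_nil.
  by rewrite big_nil; split; [exact: dual_zero | exact: K0].
have -> : (fun x : U => \sum_(m <- a :: r) w m * phi m x) =
   fadd (fscale (w a) (phi a)) (fun x => \sum_(m <- r) w m * phi m x).
  by apply: funext => x; rewrite big_cons.
split; first exact: dual_comb.
by rewrite HK // IHK big_cons.
Qed.

Definition wv (R : realType) (U : normedModType R) (N : nat)
  (K : (U -> R) -> U) (phi : 'I_N -> U -> R) (z : 'cV[R]_N) (m : 'I_N) : R :=
  (z^T *m invmx (Theta K phi)) 0 m.
Arguments wv {R U N} K phi z m.

Lemma chi_sum (R : realType) (U : normedModType R) (N : nat)
  (K : (U -> R) -> U) (phi : 'I_N -> U -> R) (z : 'cV[R]_N) :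
  \sum_(n < N) z n 0 *: chi K phi n = \sum_(m < N) wv K phi z m *: K (phi m).
Proof.
rewrite /chi. under eq_bigr do rewrite scaler_sumr.
rewrite exchange_big; apply: eq_bigr => m _.
rewrite /wv mxE scaler_suml; apply: eq_bigr => n _.
by rewrite scalerA mxE.
Qed.

Lemma pair_chi (R : realType) (U : normedModType R) (N : nat)
  (K : (U -> R) -> U) (phi : 'I_N -> U -> R) (z : 'cV[R]_N) :
  K_symmetric K -> (forall i, is_dual (phi i)) -> Theta K phi \in unitmx ->
  pairv phi (\sum_(n < N) z n 0 *: chi K phi n) = z.
Proof.
move=> Hs Hphi Hu; apply/matrixP => i j; rewrite (ord1 j) mxE chi_sum dual_sum //.
under eq_bigr do rewrite dualZ //.
have -> : z i 0 = (z^T *m invmx (Theta K phi) *m Theta K phi) 0 i.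
  by rewrite -mulmxA mulVmx // mulmx1 mxE.
rewrite mxE; apply: eq_bigr => m _.
have e : Theta K phi m i = phi i (K (phi m)) by rewrite mxE Hs.
by rewrite /wv e.
Qed.

Lemma norm_chi (R : realType) (U : normedModType R) (N : nat)
  (K : (U -> R) -> U) (phi : 'I_N -> U -> R) (z : 'cV[R]_N) :
  K_linear K -> K_symmetric K -> K_induces_norm K ->
  (forall i, is_dual (phi i)) -> Theta K phi \in unitmx ->
  `|\sum_(n < N) z n 0 *: chi K phi n| ^+ 2 = (z^T *m invmx (Theta K phi) *m z) 0 0.
Proof.
move=> HK Hs Hn Hphi Hu.
have [Hd HKg] := @K_sum _ _ K N phi (wv K phi z) (index_enum 'I_N) HK Hphi.
have := @pair_chi _ _ N K phi z Hs Hphi Hu.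
rewrite chi_sum -HKg Hn // => Hp.
rewrite mxE; apply: eq_bigr => m _.
have := congr1 (fun M : 'cV[R]_N => M m 0) Hp; rewrite /= mxE => ->; by rewrite /wv.
Qed.

Lemma pyth (R : realType) (U : normedModType R) (N : nat)
  (K : (U -> R) -> U) (phi : 'I_N -> U -> R) (u : U) :
  K_linear K -> K_bijective K -> K_symmetric K -> K_induces_norm K ->
  (forall i, is_dual (phi i)) -> Theta K phi \in unitmx ->
  let v := \sum_(n < N) pairv phi u n 0 *: chi K phi n in
  `|u| ^+ 2 = `|v| ^+ 2 + `|u - v| ^+ 2.
Proof.
move=> HK [_ Hsurj] Hs Hn Hphi Hu v.
set z := pairv phi u.
have Nv := @norm_chi _ _ N K phi z HK Hs Hn Hphi Hu.
have [Hd HKg] := @K_sum _ _ K N phi (wv K phi z) (index_enum 'I_N) HK Hphi.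
set g := (fun x => _) in Hd HKg.
have Hv : K g = v by rewrite HKg /v chi_sum.
have [f [Hf Hfu]] := Hsurj u.
have Hh := @dual_comb _ _ (-1) _ _ Hd Hf.
have HKh : K (fadd (fscale (-1) g) f) = u - v.
  by rewrite HK // Hv Hfu scaleN1r addrC.
have := Hn _ Hh; rewrite HKh {1}/fadd {1}/fscale.
have gu : g u = `|v| ^+ 2.
  rewrite /v (_ : pairv phi u = z) // Nv /g mxE; apply eq_bigr => m _.
  have -> : z m 0 = phi m u by rewrite /z mxE.
  by [].
have gv : g v = `|v| ^+ 2 by rewrite -Hv Hn.
have fv : f v = g u by rewrite -Hv Hs // Hfu.
have fu : f u = `|u| ^+ 2 by rewrite -Hfu Hn.
have Hopp : forall (k : U -> R) x y, is_dual k -> k (x - y) = k x - k y.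
  by move=> k x y Hk; rewrite dualD // -scaleN1r dualZ // mulN1r.
rewrite (Hopp g) // (Hopp f) // gu gv fv gu fu => ->; lra.
Qed.

Theorem proposition2p3 (R : realType) (U : completeNormedModType R)
  (K : (U -> R) -> U) (N I M : nat) (phi : 'I_N -> U -> R)
  (G : 'cV[R]_N -> 'cV[R]_I) (F : 'cV[R]_N -> 'cV[R]_M) (gamma : R)
  (o : 'cV[R]_I) (y : 'cV[R]_M) (udag : U) :
  separable U ->
  K_linear K -> K_bijective K -> K_symmetric K -> K_positive K ->
  K_induces_norm K ->
  (forall i, is_dual (phi i)) ->
  (forall i, phi i <> (fun _ => 0)) ->
  Theta K phi \in unitmx ->
  gamma != 0 ->
  is_minimizer (fun u : U => F (pairv phi u) = y)
    (fun u : U => `|u| ^+ 2 + gamma ^- 2 * sqnorm (G (pairv phi u) - o)) udag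
  <->
  exists zdag : 'cV[R]_N,
    is_minimizer (fun z : 'cV[R]_N => F z = y)
      (fun z : 'cV[R]_N =>
         (z^T *m invmx (Theta K phi) *m z) 0 0 + gamma ^- 2 * sqnorm (G z - o))
      zdag
    /\ udag = \sum_(n < N) zdag n 0 *: chi K phi n.
Proof.
move=> _ HK Hb Hs _ Hn Hphi _ Hu _.
have Pc := fun z => @pair_chi _ _ N K phi z Hs Hphi Hu.
have Nc := fun z => @norm_chi _ _ N K phi z HK Hs Hn Hphi Hu.
have Py := fun u => @pyth _ _ N K phi u HK Hb Hs Hn Hphi Hu.
split.
- move=> [Hc Hmin].
  set zd := pairv phi udag.
  exists zd.
  set vd := \sum_(n < N) zd n 0 *: chi K phi n.
  have Pv : pairv phi vd = zd by apply: Pc.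
  have E : udag = vd.
    have := Hmin vd; rewrite Pv => /(_ Hc).
    have := Py udag; rewrite /= -/zd -/vd => ->.
    move=> H.
    have H2 : `|udag - vd| ^+ 2 <= 0 by lra.
    have H3 : `|udag - vd| ^+ 2 = 0 by apply/eqP; rewrite eq_le H2 sqr_ge0.
    move/eqP: H3; rewrite sqrf_eq0 normr_eq0 subr_eq0 => /eqP //.
  split; last by [].
  split; first exact: Hc.
  move=> z Hz.
  have := Hmin (\sum_(n < N) z n 0 *: chi K phi n); rewrite Pc => /(_ Hz).
  by rewrite Nc {1}E Nc.
- move=> [zd [[Hc Hmin] ->]].
  split; first by rewrite Pc.
  move=> u Hu'.
  rewrite Pc Nc.
  have := Hmin _ Hu'.
  have := Py u; rewrite /= Nc => ->.
  have := sqr_ge0 `|u - \sum_(n < N) pairv phi u n 0 *: chi K phi n|.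
  lra.
Qed.
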